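(* Let $n\ge 2$ be an integer and let $n_0,n_1$ be integers with $n=n_0+n_1$. The following are equivalent: (1) $(n_0,n_1)$ is a hypercubic bipartition (HCBP) of $n$; (2) $f(n)=n_1+f(n_1)+f(n_0)$ and $n_0\ge n_1\ge 1$; (3) $(n_0,n_1)=\left(\frac{n+d_i(n)}{2},\frac{n-d_i(n)}{2}\right)$ for some $i\in\{1,\dots,\lceil\log_2 n\rceil\}$.
   Context: Let $f:\mathbb{N}\to\mathbb{N}_0$ be defined by $f(1)=0$ and $f(n)=\lfloor n/2\rfloor+f(\lfloor n/2\rfloor)+f(\lceil n/2\rceil)$ for $n>1$. For $i\in\mathbb{N}$ and $n\in\mathbb{N}_0$ let $d_i(n)=2^{i-1}-\left|(n\bmod 2^i)-2^{i-1}\right|$. For $k\ge 0$ and $0\le m<2^k$, let $\beta_k(m)\in\{0,1\}^k$ be the point whose $j$-th coordinate is the binary digit of $m$ of weight $2^{k-j}$. For $n\ge 2$ put $k=\lceil\log_2 n\rceil$. A pair $(n_0,n_1)$ of integers with $n=n_0+n_1$ and $n_0\ge n_1\ge 1$ is a hypercubic bipartition (HCBP) of $n$ if there is $i\in\{1,\dots,k\}$ such that the hyperplane $x_i=1/2$ splits the $n$ points $\beta_k(0),\dots,\beta_k(n-1)$ into $n_0$ points on one side and $n_1$ on the other. *)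

(* Defs.v *)
From mathcomp Require Import all_boot.
Set Implicit Arguments. Unset Strict Implicit. Unset Printing Implicit Defensive.

(* f(1) = 0, f(n) = floor(n/2) + f(floor(n/2)) + f(ceil(n/2)) for n > 1.
   Defined with fuel; fuel n suffices since ceil(n/2) < n for n >= 2.
   (f 0 = 0 is an arbitrary value outside the paper's domain.) *)
Fixpoint f_aux (fuel n : nat) : nat :=
  match fuel with
  | 0 => 0
  | k.+1 => if n <= 1 then 0
            else n./2 + f_aux k n./2 + f_aux k (uphalf n)
  end.
Definition f (n : nat) : nat := f_aux n n.

Definition distn (a b : nat) : nat := (a - b) + (b - a).

Definition d (i n : nat) : nat :=
  2 ^ i.-1 - distn (n %% 2 ^ i) (2 ^ i.-1).

(* j-th coordinate (1 <= j <= k) of beta_k(m): binary digit of m of weight 2^(k-j) *)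
Definition beta (k m j : nat) : bool := odd (m %/ 2 ^ (k - j)).

Definition clog2 (n : nat) : nat := up_log 2 n.

Definition side (n i : nat) (b : bool) : nat :=
  count (fun m => beta (clog2 n) m i == b) (iota 0 n).

Definition HCBP (n n0 n1 : nat) : Prop :=
  n = n0 + n1 /\ n1 <= n0 /\ 1 <= n1 /\
  exists i, 1 <= i <= clog2 n /\
    ((side n i false = n0 /\ side n i true = n1) \/
     (side n i true = n0 /\ side n i false = n1)).

(* Main.v *)
Require Import Defs.
From mathcomp Require Import all_boot zify.

Lemma f_aux_stable n : forall fuel, n <= fuel -> f_aux fuel n = f n.
Proof.
elim/ltn_ind: n => n IH fuel Hn.
rewrite /f.
case: fuel Hn => [|fu] Hn.
  by have -> : n = 0 by lia.
have E : forall m, f_aux fu.+1 m = (if m <= 1 then 0 else m./2 + f_aux fu m./2 + f_aux fu (uphalf m)) by [].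
have E2 : forall m, f_aux m.+1 m.+1 = (if m.+1 <= 1 then 0 else m.+1./2 + f_aux m m.+1./2 + f_aux m (uphalf m.+1)) by [].
case: n IH Hn => [|m] IH Hn; first by [].
rewrite E E2. case: ifP => // Hm.
have h1 : m.+1./2 < m.+1 by lia.
have h2 : uphalf m.+1 < m.+1 by lia.
rewrite (IH _ h1 fu) ?(IH _ h2 fu) ?(IH _ h1 m) ?(IH _ h2 m) //; lia.
Qed.

Lemma f_rec n : 2 <= n -> f n = n./2 + f n./2 + f (uphalf n).
Proof.
move=> Hn. case: n Hn => [|m] Hn //.
have E2 : f m.+1 = (if m.+1 <= 1 then 0 else m.+1./2 + f_aux m m.+1./2 + f_aux m (uphalf m.+1)) by [].
rewrite E2. case: ifP => Hm; first by lia.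
rewrite !f_aux_stable //; lia.
Qed.

Lemma f0 : f 0 = 0. Proof. by []. Qed.
Lemma f1 : f 1 = 0. Proof. by []. Qed.

Lemma f_even x : f (2 * x) = 2 * f x + x.
Proof.
case: x => [|x]; first by [].
rewrite f_rec; last by lia.
have -> : (2 * x.+1)./2 = x.+1 by lia.
have -> : uphalf (2 * x.+1) = x.+1 by lia.
lia.
Qed.

Lemma f_odd x : f (2 * x + 1) = f x + f (x + 1) + x.
Proof.
case: x => [|x]; first by [].
rewrite f_rec; last by lia.
have -> : (2 * x.+1 + 1)./2 = x.+1 by lia.
have -> : uphalf (2 * x.+1 + 1) = x.+1 + 1 by lia.
lia.
Qed.

Definition P a b := exists j, (2 ^ j %| a \/ 2 ^ j %| b) /\ a <= b + 2 ^ j /\ b <= a + 2 ^ j.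

Lemma P_sym a b : P a b -> P b a.
Proof. case=> j [H1 [H2 H3]]; exists j; split; [tauto|lia]. Qed.

Lemma P_near a b : a <= b + 1 -> b <= a + 1 -> P a b.
Proof. move=> h1 h2; exists 0; rewrite expn0 !dvd1n; split; [by left|lia]. Qed.

Lemma pow2_odd j m : 2 ^ j %| m -> odd m -> j = 0.
Proof.
case: j => // j H Ho.
have : 2 %| m by apply: dvdn_trans H; rewrite expnS dvdn_mulr.
by rewrite dvdn2 Ho.
Qed.

Lemma pow2S_dvd2 k m : (2 ^ k.+1 %| 2 * m) = (2 ^ k %| m).
Proof. by rewrite expnS dvdn_pmul2l. Qed.

Lemma E1 x y : P (2 * x) (2 * y) <-> P x y.
Proof.
split.
- case=> [[|k]] [Hd [H1 H2]].
  + apply: P_near; rewrite expn0 in H1 H2; lia.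
  + exists k; rewrite !pow2S_dvd2 in Hd; rewrite expnS in H1 H2; split; [done|lia].
- case=> k [Hd [H1 H2]]; exists k.+1; rewrite !pow2S_dvd2 expnS; split; [done|lia].
Qed.

Lemma E2 x y : P (2 * x + 1) (2 * y + 1) <-> x = y.
Proof.
split.
- case=> [[|k]] [Hd [H1 H2]].
  + rewrite expn0 in H1 H2; lia.
  + exfalso; case: Hd => Hd.
    * have Ho : odd (2 * x + 1) by lia.
      by have := pow2_odd _ _ Hd Ho.
    * have Ho : odd (2 * y + 1) by lia.
      by have := pow2_odd _ _ Hd Ho.
- move=> ->; apply: P_near; lia.
Qed.

Lemma G3 x y k : 2 ^ k %| y -> x + 1 <= y + 2 ^ k -> y <= x + 2 ^ k -> P (2 * x + 1) (2 * y).
Proof.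
move=> Hd h1 h2; exists k.+1; rewrite pow2S_dvd2 expnS; split; [by right|lia].
Qed.

Lemma pow2_odd1 j m : 2 ^ j %| m -> odd m -> 2 ^ j = 1.
Proof. by move=> H Ho; rewrite (pow2_odd _ _ H Ho). Qed.

Lemma E3 x y : P (2 * x + 1) (2 * y) <-> P x y /\ P (x + 1) y.
Proof.
split.
- case=> [[|k]] [Hd [H1 H2]].
  + rewrite expn0 in H1 H2; split; apply: P_near; lia.
  + case: Hd => Hd.
    * have Ho : odd (2 * x + 1) by lia.
      by have := pow2_odd _ _ Hd Ho.
    * rewrite pow2S_dvd2 in Hd; rewrite expnS in H1 H2.
      split; exists k; (split; [by right|lia]).
- case=> [[j1 [Hd1 [H11 H12]]] [j2 [Hd2 [H21 H22]]]].
  have [Hs|Hs] : (y <= x + 1 /\ x <= y) \/ (x + 2 <= y \/ y + 1 <= x) by lia.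
    by apply: P_near; lia.
  case: Hs => Hs.
  + case: Hd1 => Hd1; last by apply: (G3 _ _ _ Hd1); lia.
    have Hx : ~~ odd x.
      apply/negP => Ho; have := pow2_odd1 _ _ Hd1 Ho; lia.
    have [Hc|Hc] : (2 ^ j2 %| y /\ y <= x + 2 ^ j2) \/ 2 ^ j2 %| x + 1.
      case: Hd2 => Hd2; first by right.
      case: (leqP y (x + 2 ^ j2)) => Hy; first by left.
      right; have -> : x + 1 = y - 2 ^ j2 by lia.
      by apply: dvdn_sub => //.
    * by case: Hc => Hc1 Hc2; apply: (G3 _ _ _ Hc1); lia.
    * have Ho : odd (x + 1) by lia.
      have := pow2_odd1 _ _ Hc Ho => E.
      apply: (G3 _ _ 1); rewrite ?expn1; lia.
  + case: Hd2 => Hd2; last by apply: (G3 _ _ _ Hd2); lia.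
    have Hx : odd x.
      apply/negPn/negP => Ho.
      have Ho' : odd (x + 1) by lia.
      have := pow2_odd1 _ _ Hd2 Ho'; lia.
    have K1 : 2 ^ j1 = 1 \/ (2 ^ j1 %| y /\ x + 1 <= y + 2 ^ j1).
      case: Hd1 => Hd1; first by left; apply: pow2_odd1 _ _ Hd1 Hx.
      case: (leqP (x + 1) (y + 2 ^ j1)) => Hy; first by right.
      left; apply: (pow2_odd1 _ x) => //.
      have -> : x = y + 2 ^ j1 by lia.
      by rewrite dvdn_add.
    case: K1 => [E|[Hc1 Hc2]]; last by apply: (G3 _ _ _ Hc1); lia.
    apply: (G3 _ _ 1); rewrite ?expn1; lia.
Qed.

Lemma parity a : exists x, a = 2 * x \/ a = 2 * x + 1.
Proof. exists a./2; lia. Qed.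

Definition Keyn n := forall a b, a + b = n ->
  f a + f b + minn a b <= f n /\ (f n = f a + f b + minn a b <-> P a b).

Lemma key n : Keyn n.
Proof.
elim/ltn_ind: n => n IH.
have oddeven : forall x y, 2 * x + 1 + 2 * y = n ->
   f (2*x+1) + f (2*y) + minn (2*x+1) (2*y) <= f n /\
   (f n = f (2*x+1) + f (2*y) + minn (2*x+1) (2*y) <-> P (2*x+1) (2*y)).
  move=> x y Hn.
  case: (posnP (x + y)) => Hxy.
    have -> : x = 0 by lia. have -> : y = 0 by lia.
    rewrite -Hn; have -> : x = 0 by lia. have -> : y = 0 by lia.
    split => //; split => // _; apply: P_near; lia.
  have [I1 I2] := IH (x + y) ltac:(lia) x y erefl.
  have [J1 J2] := IH (x + y + 1) ltac:(lia) (x + 1) y ltac:(lia).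
  have En : f n = f (x + y) + f (x + y + 1) + (x + y).
    have E0 : 2 * x + 1 + 2 * y = 2 * (x + y) + 1 by lia.
    by rewrite -Hn E0 f_odd.
  rewrite En f_odd f_even E3 -I2 -J2.
  split; first lia.
  split; [move=> H; split; lia | case=> H1 H2; lia].
move=> a b Hab.
have [x Hx] := parity a; have [y Hy] := parity b.
case: Hx => Ha; case: Hy => Hb; subst a b.
-
  case: (posnP (x + y)) => Hxy.
    have -> : x = 0 by lia. have -> : y = 0 by lia.
    rewrite -Hab; have -> : x = 0 by lia. have -> : y = 0 by lia.
    split => //; split => // _; apply: P_near; lia.
  have [I1 I2] := IH (x + y) ltac:(lia) x y erefl.
  have En : f n = 2 * f (x + y) + (x + y).
    have E0 : 2 * x + 2 * y = 2 * (x + y) by lia.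
    by rewrite -Hab E0 f_even.
  rewrite En !f_even E1 -I2.
  split; first lia.
  split; lia.
-
  have [H1 H2] := oddeven y x ltac:(lia).
  have M : minn (2 * x) (2 * y + 1) = minn (2 * y + 1) (2 * x) by rewrite minnC.
  rewrite M; split; first by lia.
  split => H; first by apply: P_sym; apply/H2; lia.
  have := P_sym _ _ H => /H2; lia.
- exact: oddeven.
-
  have [I1 I2] := IH (x + y + 1) ltac:(lia) (x + 1) y ltac:(lia).
  have [J1 J2] := IH (x + y + 1) ltac:(lia) x (y + 1) ltac:(lia).
  have En : f n = 2 * f (x + y + 1) + (x + y + 1).
    have E0 : 2 * x + 1 + (2 * y + 1) = 2 * (x + y + 1) by lia.
    by rewrite -Hab E0 f_even.
  have Fx : f (2 * x + 1) = f x + f (x + 1) + x by apply: f_odd.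
  have Fy : f (2 * y + 1) = f y + f (y + 1) + y by apply: f_odd.
  rewrite En Fx Fy E2.
  split; first lia.
  split; first lia.
  move=> Exy; subst y.
  have e1 : f (x + x + 1) = f (x + 1) + f x + minn (x + 1) x by apply/I2; apply: P_near; lia.
  have e2 : f (x + x + 1) = f x + f (x + 1) + minn x (x + 1) by apply/J2; apply: P_near; lia.
  lia.
Qed.

Lemma dchar j n c : c <= n ->
  (d j.+1 n = c <-> c <= 2 ^ j /\ (2 ^ j.+1 %| n - c \/ 2 ^ j.+1 %| n + c)).
Proof.
move=> Hc.
rewrite /d /distn /=.
set H := 2 ^ j.
have HM : 2 ^ j.+1 = 2 * H by rewrite expnS.
have Hpos : 0 < H by rewrite expn_gt0.
rewrite HM.
set M := 2 * H.
have Mpos : 0 < M by rewrite /M; lia.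
have Edec := divn_eq n M.
have Hr := ltn_pmod n Mpos.
set q := n %/ M in Edec. set r := n %% M in Edec Hr *.
set Q := q * M in Edec.
have HQ : M %| Q by rewrite /Q dvdn_mull.
split.
- move=> Hd.
  case: (leqP r H) => Hrh.
  + split; first lia.
    left; have -> : n - c = Q by lia. done.
  + split; first lia.
    right; have -> : n + c = Q + M by lia.
    by rewrite dvdn_add.
- case=> HcH [/dvdnP[t Ht]|/dvdnP[t Ht]].
  + have En : n = t * M + c by lia.
    have : r = c.
      rewrite /r En modnMDl modn_small //; lia.
    lia.
  + case: (posnP c) => Hc0.
    * have En : n = t * M by lia.
      have : r = 0 by rewrite /r En modnMl.
      lia.
    * case: t Ht => [|t] Ht; first by lia.
      have En : n = t * M + (M - c) by rewrite mulSn in Ht; lia.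
      have : r = M - c.
        rewrite /r En modnMDl modn_small //; lia.
      lia.
Qed.

Lemma d_big i n : 0 < i -> n <= 2 ^ i.-1 -> d i n = n.
Proof.
case: i => // j _ /= Hn.
rewrite /d /distn /= modn_small; first lia.
rewrite expnS; lia.
Qed.

Lemma d_le i n : d i n <= 2 ^ i.-1.
Proof. by rewrite /d leq_subr. Qed.

Lemma ones_formula p : 0 < p -> forall n,
  2 * count (fun m => odd (m %/ p)) (iota 0 n) + (p - distn (n %% (2 * p)) p) = n.
Proof.
move=> Hp; elim=> [|n IH].
  rewrite /distn mod0n /=; lia.
rewrite -[n.+1]addn1 iotaD count_cat /= add0n.
have M2 : 0 < 2 * p by lia.
have Edec := divn_eq n (2 * p).
have Hr := ltn_pmod n M2.
set q := n %/ (2 * p) in Edec. set r := n %% (2 * p) in Edec Hr IH *.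
have Hodd : odd (n %/ p) = (p <= r).
  have -> : n = (q * 2) * p + r by rewrite Edec mulnA (mulnC q 2) -(mulnA 2) (mulnC 2); lia.
  rewrite divnMDl // oddD oddM /= andbF /=.
  case: (leqP p r) => Hpr.
    have -> : r = 1 * p + (r - p) by lia.
    rewrite divnMDl // divn_small //; lia.
  by rewrite divn_small.
have Hnext : (n + 1) %% (2 * p) = if r + 1 < 2 * p then r + 1 else 0.
  case: ifP => Hc.
    have -> : n + 1 = q * (2 * p) + (r + 1) by lia.
    by rewrite modnMDl modn_small.
  have -> : n + 1 = (q + 1) * (2 * p) by rewrite mulnDl mul1n; lia.
  by rewrite modnMl.
rewrite Hodd Hnext.
move: IH; rewrite /distn.
case: (leqP p r) => Hpr; case: ifP => Hc /=; lia.
Qed.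

Lemma side_true n i : i <= clog2 n -> 2 * side n i true + d (clog2 n - i).+1 n = n.
Proof.
move=> Hi; rewrite /side /beta.
rewrite (eq_count (a2 := fun m => odd (m %/ 2 ^ (clog2 n - i)))); last by move=> m; rewrite eqb_id.
rewrite /d /= expnS.
apply: ones_formula; by rewrite expn_gt0.
Qed.

Lemma side_sum n i : side n i false + side n i true = n.
Proof.
rewrite /side addnC.
set a := (fun m => beta (clog2 n) m i == true).
rewrite (eq_count (a1 := fun m => beta (clog2 n) m i == false) (a2 := predC a)); last first.
  by move=> m; rewrite /a /= eqbF_neg eqb_id.
by rewrite count_predC size_iota.
Qed.

Theorem theorem13 (n n0 n1 : nat) :
  2 <= n -> n = n0 + n1 ->
  (HCBP n n0 n1 <-> (f n = n1 + f n1 + f n0 /\ n1 <= n0 /\ 1 <= n1)) /\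
  (HCBP n n0 n1 <->
     exists i, 1 <= i <= clog2 n /\ 2 * n0 = n + d i n /\ 2 * n1 + d i n = n).
Proof.
move=> Hn2 Hn.
set k := clog2 n.
have Hk1 : 0 < k by rewrite /k /clog2 up_log_gt0; lia.
have Hkl : 2 ^ k.-1 < n by apply: up_log_gtn.
have Hku : n <= 2 ^ k by apply: up_logP.
have dsmall : forall i, i <= k -> d i n < n.
  move=> i Hi; apply: leq_ltn_trans (d_le i n) _.
  apply: leq_ltn_trans Hkl; apply: leq_pexp2l => //; lia.
have A : HCBP n n0 n1 <->
     exists i, 1 <= i <= clog2 n /\ 2 * n0 = n + d i n /\ 2 * n1 + d i n = n.
  split.
  - case=> _ [Hle [H1 [i [/andP [Hi1 Hi2] Hor]]]].
    have T := side_true n i Hi2. have S := side_sum n i.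
    exists (clog2 n - i).+1; split; first by apply/andP; split; lia.
    case: Hor => [[E1 E2]|[E1 E2]]; lia.
  - case=> i [/andP [Hi1 Hi2] [E1 E2]].
    have Hds := dsmall i Hi2.
    split; first by []. split; first lia. split; first lia.
    exists (k.+1 - i); split; first by apply/andP; split; rewrite -/k; lia.
    have T := side_true n (k.+1 - i) ltac:(rewrite -/k; lia).
    have S := side_sum n (k.+1 - i).
    have Ei : (clog2 n - (k.+1 - i)).+1 = i by rewrite -/k; lia.
    rewrite Ei in T.
    left; lia.
have B : (f n = n1 + f n1 + f n0 /\ n1 <= n0 /\ 1 <= n1) <->
     exists i, 1 <= i <= clog2 n /\ 2 * n0 = n + d i n /\ 2 * n1 + d i n = n.
  have [K1 K2] := key n n0 n1 (esym Hn).
  split.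
  - case=> Hf [Hle H1].
    have /K2 [j [Hd [I1 I2]]] : f n = f n0 + f n1 + minn n0 n1 by lia.
    have Dj : d j.+1 n = n0 - n1.
      apply/dchar; first lia.
      split; first lia.
      have -> : n - (n0 - n1) = 2 * n1 by lia.
      have -> : n + (n0 - n1) = 2 * n0 by lia.
      rewrite !pow2S_dvd2; tauto.
    case: (leqP j.+1 k) => Hjk.
      by exists j.+1; split; [apply/andP; split | ]; lia.
    have Db : d j.+1 n = n.
      apply: d_big => //=; apply: leq_trans Hku _; apply: leq_pexp2l => //; lia.
    lia.
  - case=> i [/andP [Hi1 Hi2] [E1 E2]].
    have Hds := dsmall i Hi2.
    case: i Hi1 Hi2 E1 E2 Hds => [|j] // _ Hi2 E1 E2 Hds.
    have Dj : d j.+1 n = n0 - n1 by lia.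
    have [Hc Hdv] := (dchar j n (n0 - n1) ltac:(lia)).1 Dj.
    have HP : P n0 n1.
      exists j.
      move: Hdv.
      have -> : n - (n0 - n1) = 2 * n1 by lia.
      have -> : n + (n0 - n1) = 2 * n0 by lia.
      rewrite !pow2S_dvd2 => Hdv; split; [tauto|lia].
    have := (proj2 K2) HP.
    lia.
split => //.
split => H; first by apply/B/A.
by apply/A/B.
Qed.
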